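(* Let $x,y>0$ and $r,s\in\mathbb{R}$, and let $F_{r,s;x,y}(w)=E(r+w,s+w;x,y)$ for $w\in\mathbb{R}$. Then $F_{r,s;x,y}$ is logarithmically convex on $\bigl(-\infty,-\frac{s+r}{2}\bigr)$ and logarithmically concave on $\bigl(-\frac{s+r}{2},\infty\bigr)$, i.e. $\frac{d^2}{dw^2}\ln F_{r,s;x,y}(w)\ge0$ for $w<-\frac{r+s}2$ and $\le 0$ for $w>-\frac{r+s}2$.
   Context: For $x,y>0$ and $r,s\in\mathbb{R}$ the extended mean values are defined by $E(r,s;x,y)=\bigl(\frac{r}{s}\cdot\frac{y^s-x^s}{y^r-x^r}\bigr)^{1/(s-r)}$ if $rs(r-s)(x-y)\neq0$; $E(r,0;x,y)=E(0,r;x,y)=\bigl(\frac1r\cdot\frac{y^r-x^r}{\ln y-\ln x}\bigr)^{1/r}$ if $r(x-y)\neq0$; $E(r,r;x,y)=e^{-1/r}\bigl(\frac{x^{x^r}}{y^{y^r}}\bigr)^{1/(x^r-y^r)}$ if $r(x-y)\neq0$; $E(0,0;x,y)=\sqrt{xy}$ if $x\neq y$; $E(r,s;x,x)=x$. *)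

(* Defs.v *)
From Stdlib Require Import Reals.
Open Scope R_scope.

(* Extended mean values E(r,s;x,y) (Stolarsky means), for x,y > 0.
   Cases checked in the order: x = y; r = s = 0; r = s; s = 0; r = 0; general. *)
Definition E (r s x y : R) : R :=
  if Req_EM_T x y then x
  else if Req_EM_T r s then
    (if Req_EM_T r 0 then sqrt (x * y)
     else exp (- / r) *
          Rpower (Rpower x (Rpower x r) / Rpower y (Rpower y r))
                 (/ (Rpower x r - Rpower y r)))
  else if Req_EM_T s 0 then
    Rpower (/ r * ((Rpower y r - Rpower x r) / (ln y - ln x))) (/ r)
  else if Req_EM_T r 0 then
    Rpower (/ s * ((Rpower y s - Rpower x s) / (ln y - ln x))) (/ s)
  else
    Rpower (r / s * ((Rpower y s - Rpower x s) / (Rpower y r - Rpower x r)))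
           (/ (s - r)).

Definition F (r s x y w : R) : R := E (r + w) (s + w) x y.

Definition convex_on (P : R -> Prop) (f : R -> R) : Prop :=
  forall a b t, P a -> P b -> 0 <= t <= 1 ->
    f (t * a + (1 - t) * b) <= t * f a + (1 - t) * f b.

Definition concave_on (P : R -> Prop) (f : R -> R) : Prop :=
  forall a b t, P a -> P b -> 0 <= t <= 1 ->
    t * f a + (1 - t) * f b <= f (t * a + (1 - t) * b).

(* Main.v *)
Require Import Defs.
From Stdlib Require Import Reals Lra Lia Psatz.
Open Scope R_scope.

Definition lim0 (f : R -> R) (l : R) : Prop := limit1_in f (fun t => t <> 0) l 0.

Lemma lim0_def f l : lim0 f l <-> forall eps, 0 < eps -> exists del, 0 < del /\
  forall t, t <> 0 -> Rabs t < del -> Rabs (f t - l) < eps.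
Proof.
  unfold lim0, limit1_in, limit_in; simpl; unfold Rdist; split.
  - intros H eps He. destruct (H eps He) as [d [Hd H1]]. exists d; split; auto.
    intros t Ht Ht2. apply H1. split; auto. rewrite Rminus_0_r; auto.
  - intros H eps He. destruct (H eps He) as [d [Hd H1]]. exists d; split; auto.
    intros t [Ht Ht2]. apply H1; auto. rewrite Rminus_0_r in Ht2; auto.
Qed.

Lemma lim0_ext f g l : (forall t, t <> 0 -> f t = g t) -> lim0 f l -> lim0 g l.
Proof.
  intros E H. rewrite lim0_def in *. intros eps He. destruct (H eps He) as [d [Hd H1]].
  exists d; split; auto. intros t Ht Ht2. rewrite <- E; auto.
Qed.

Lemma lim0_plus f g l l' : lim0 f l -> lim0 g l' -> lim0 (fun t => f t + g t) (l + l').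
Proof. apply limit_plus. Qed.
Lemma lim0_mult f g l l' : lim0 f l -> lim0 g l' -> lim0 (fun t => f t * g t) (l * l').
Proof. apply limit_mul. Qed.
Lemma lim0_inv f l : lim0 f l -> l <> 0 -> lim0 (fun t => / f t) (/ l).
Proof. apply limit_inv. Qed.
Lemma lim0_const c : lim0 (fun _ => c) c.
Proof. apply (limit_free (fun _ => c) _ 0 0). Qed.

Lemma lim0_comp f g l : lim0 f l -> continuity_pt g l -> lim0 (fun t => g (f t)) (g l).
Proof.
  intros H Hc. rewrite lim0_def in *. intros eps He.
  unfold continuity_pt, continue_in, limit1_in, limit_in in Hc; simpl in Hc; unfold Rdist in Hc.
  destruct (Hc eps He) as [a [Ha H2]].
  destruct (H a Ha) as [d [Hd H1]]. exists d; split; auto.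
  intros t Ht Ht2. destruct (Req_dec (f t) l) as [E|E].
  - rewrite E, Rminus_diag, Rabs_R0; auto.
  - apply H2. split. split; auto. exact I. apply H1; auto.
Qed.

Lemma cont_lim0 g : continuity_pt g 0 -> lim0 g (g 0).
Proof.
  intros H. apply (lim0_comp (fun t => t) g 0); auto. apply lim_x.
Qed.

Lemma lim0_cont g : lim0 g (g 0) -> continuity_pt g 0.
Proof.
  intros H. rewrite lim0_def in H.
  unfold continuity_pt, continue_in, limit1_in, limit_in; simpl; unfold Rdist.
  intros eps He. destruct (H eps He) as [d [Hd H1]]. exists d; split; auto.
  intros t [[_ Ht] Ht2]. apply H1; auto. rewrite Rminus_0_r in Ht2; auto.
Qed.

Lemma deriv_cont f x l : derivable_pt_lim f x l -> continuity_pt f x.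
Proof. intros H. apply derivable_continuous_pt. exists l; auto. Qed.

Lemma deriv_lim0 g l : derivable_pt_lim g 0 l -> lim0 g (g 0).
Proof. intros H; apply cont_lim0; eapply deriv_cont; eauto. Qed.

Lemma cauchy_pt N D N' D' :
  continuity_pt N 0 -> continuity_pt D 0 -> N 0 = 0 -> D 0 = 0 ->
  (forall t, t <> 0 -> derivable_pt_lim N t (N' t)) ->
  (forall t, t <> 0 -> derivable_pt_lim D t (D' t)) ->
  (forall t, t <> 0 -> D t <> 0) -> (forall t, t <> 0 -> D' t <> 0) ->
  forall t, t <> 0 -> exists c, c <> 0 /\ Rabs c < Rabs t /\ N t / D t = N' c / D' c.
Proof.
  intros cN cD N0 D0 dN dD Dn D'n t Ht.
  destruct (Rlt_or_le 0 t) as [Hp|Hn].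
  - assert (pr1 : forall c, 0 < c < t -> derivable_pt N c).
    { intros c Hc. exists (N' c). apply dN. lra. }
    assert (pr2 : forall c, 0 < c < t -> derivable_pt D c).
    { intros c Hc. exists (D' c). apply dD. lra. }
    assert (HC : forall (F : R -> R) F', continuity_pt F 0 -> (forall t, t <> 0 -> derivable_pt_lim F t (F' t)) ->
       forall c, 0 <= c <= t -> continuity_pt F c).
    { intros F F' c0 d0 c Hc. destruct (Req_dec c 0) as [->|]; auto. eapply deriv_cont; eauto. }
    destruct (MVT N D 0 t pr1 pr2 Hp (HC N N' cN dN) (HC D D' cD dD)) as [c [P E]].
    assert (E1 : derive_pt N c (pr1 c P) = N' c).
    { apply derive_pt_eq_0. apply dN. lra. }
    assert (E2 : derive_pt D c (pr2 c P) = D' c).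
    { apply derive_pt_eq_0. apply dD. lra. }
    rewrite E1, E2, N0, D0 in E. exists c. split. lra. split.
    rewrite !Rabs_right; lra.
    assert (D t <> 0) by auto. assert (D' c <> 0) by (apply D'n; lra).
    field_simplify_eq; auto. lra.
  - assert (Hn' : t < 0) by lra.
    assert (pr1 : forall c, t < c < 0 -> derivable_pt N c).
    { intros c Hc. exists (N' c). apply dN. lra. }
    assert (pr2 : forall c, t < c < 0 -> derivable_pt D c).
    { intros c Hc. exists (D' c). apply dD. lra. }
    assert (HC : forall (F : R -> R) F', continuity_pt F 0 -> (forall t, t <> 0 -> derivable_pt_lim F t (F' t)) ->
       forall c, t <= c <= 0 -> continuity_pt F c).
    { intros F F' c0 d0 c Hc. destruct (Req_dec c 0) as [->|]; auto. eapply deriv_cont; eauto. }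
    destruct (MVT N D t 0 pr1 pr2 Hn' (HC N N' cN dN) (HC D D' cD dD)) as [c [P E]].
    assert (E1 : derive_pt N c (pr1 c P) = N' c).
    { apply derive_pt_eq_0. apply dN. lra. }
    assert (E2 : derive_pt D c (pr2 c P) = D' c).
    { apply derive_pt_eq_0. apply dD. lra. }
    rewrite E1, E2, N0, D0 in E. exists c. split. lra. split.
    rewrite !Rabs_left; lra.
    assert (D t <> 0) by auto. assert (D' c <> 0) by (apply D'n; lra).
    field_simplify_eq; auto. lra.
Qed.

Lemma LH N D N' D' l :
  continuity_pt N 0 -> continuity_pt D 0 -> N 0 = 0 -> D 0 = 0 ->
  (forall t, t <> 0 -> derivable_pt_lim N t (N' t)) ->
  (forall t, t <> 0 -> derivable_pt_lim D t (D' t)) ->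
  (forall t, t <> 0 -> D t <> 0) -> (forall t, t <> 0 -> D' t <> 0) ->
  lim0 (fun t => N' t / D' t) l -> lim0 (fun t => N t / D t) l.
Proof.
  intros cN cD N0 D0 dN dD Dn D'n H. rewrite lim0_def in *.
  intros eps He. destruct (H eps He) as [d [Hd H1]]. exists d; split; auto.
  intros t Ht Ht2. destruct (cauchy_pt N D N' D' cN cD N0 D0 dN dD Dn D'n t Ht) as [c [Hc [Hc2 E]]].
  rewrite E. apply H1; auto. lra.
Qed.

Lemma D_at0 f f' : continuity_pt f 0 -> (forall t, t <> 0 -> derivable_pt_lim f t (f' t)) ->
  lim0 f' (f' 0) -> derivable_pt_lim f 0 (f' 0).
Proof.
  intros cf df H.
  assert (L : lim0 (fun t => (f t - f 0) / t) (f' 0)).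
  { apply (LH (fun t => f t - f 0) (fun t => t) f' (fun _ => 1)).
    - apply lim0_cont. apply (lim0_comp f (fun z => z - f 0)). apply cont_lim0; auto.
      apply deriv_cont with (1 - 0). apply (derivable_pt_lim_minus id (fct_cte (f 0))).
      apply derivable_pt_lim_id. apply derivable_pt_lim_const.
    - apply lim0_cont. apply lim_x.
    - ring. - reflexivity.
    - intros t Ht. replace (f' t) with (f' t - 0) by ring.
      apply (derivable_pt_lim_minus f (fct_cte (f 0))); auto. apply derivable_pt_lim_const.
    - intros t _. apply derivable_pt_lim_id.
    - auto. - intros; lra.
    - apply lim0_ext with f'. intros; field. auto. }
  rewrite lim0_def in L. intros eps He. destruct (L eps He) as [d [Hd H1]].
  exists (mkposreal d Hd). simpl. intros h Hh Hh2. rewrite Rplus_0_l. apply H1; auto.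
Qed.

Lemma lim0_eq f l l' : lim0 f l -> l = l' -> lim0 f l'.
Proof. intros H ->; auto. Qed.

Lemma D_eq f x l l' : derivable_pt_lim f x l -> l = l' -> derivable_pt_lim f x l'.
Proof. intros H ->; auto. Qed.
Lemma D_mul f g x a b : derivable_pt_lim f x a -> derivable_pt_lim g x b ->
  derivable_pt_lim (fun t => f t * g t) x (a * g x + f x * b).
Proof. intros; apply (derivable_pt_lim_mult f g x a b); auto. Qed.
Lemma D_add f g x a b : derivable_pt_lim f x a -> derivable_pt_lim g x b ->
  derivable_pt_lim (fun t => f t + g t) x (a + b).
Proof. intros; apply (derivable_pt_lim_plus f g x a b); auto. Qed.
Lemma D_sub f g x a b : derivable_pt_lim f x a -> derivable_pt_lim g x b ->
  derivable_pt_lim (fun t => f t - g t) x (a - b).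
Proof. intros; apply (derivable_pt_lim_minus f g x a b); auto. Qed.
Lemma D_div f g x a b : derivable_pt_lim f x a -> derivable_pt_lim g x b -> g x <> 0 ->
  derivable_pt_lim (fun t => f t / g t) x ((a * g x - b * f x) / (g x * g x)).
Proof. intros. apply (derivable_pt_lim_div f g x a b); auto. Qed.
Lemma D_comp f g x a b : derivable_pt_lim f x a -> derivable_pt_lim g (f x) b ->
  derivable_pt_lim (fun t => g (f t)) x (b * a).
Proof. intros. apply (derivable_pt_lim_comp f g x a b); auto. Qed.
Lemma D_id x : derivable_pt_lim (fun t => t) x 1.
Proof. apply derivable_pt_lim_id. Qed.
Lemma D_const c x : derivable_pt_lim (fun _ => c) x 0.
Proof. apply (derivable_pt_lim_const c x). Qed.

Lemma sinh_pos t : 0 < t -> 0 < sinh t.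
Proof. intros. unfold sinh. assert (exp (-t) < exp t) by (apply exp_increasing; lra). lra. Qed.
Lemma sinh_opp t : sinh (- t) = - sinh t.
Proof. unfold sinh. rewrite Ropp_involutive. field. Qed.
Lemma cosh_opp t : cosh (- t) = cosh t.
Proof. unfold cosh. rewrite Ropp_involutive. field. Qed.
Lemma cosh_pos t : 0 < cosh t.
Proof. unfold cosh. pose proof (exp_pos t); pose proof (exp_pos (-t)). lra. Qed.
Lemma ch2 t : cosh t * cosh t - sinh t * sinh t = 1.
Proof.
  unfold cosh, sinh. assert (exp t * exp (-t) = 1).
  { rewrite <- exp_plus. replace (t + - t) with 0 by ring. apply exp_0. }
  nra.
Qed.
Lemma sinh_neg t : t < 0 -> sinh t < 0.
Proof. intros. replace t with (- - t) by ring. rewrite sinh_opp. pose proof (sinh_pos (-t)). lra. Qed.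
Lemma sinh_ne0 t : t <> 0 -> sinh t <> 0.
Proof. intros. destruct (Rlt_or_le 0 t). pose proof (sinh_pos t); lra. pose proof (sinh_neg t); lra. Qed.
Lemma S_pos t : t <> 0 -> 0 < sinh t / t.
Proof.
  intros. destruct (Rlt_or_le 0 t).
  - apply Rdiv_lt_0_compat; auto. apply sinh_pos; auto.
  - pose proof (sinh_neg t). replace (sinh t / t) with ((- sinh t) / (- t)) by (field; auto).
    apply Rdiv_lt_0_compat; lra.
Qed.

Lemma dsinh x : derivable_pt_lim sinh x (cosh x). Proof. apply derivable_pt_lim_sinh. Qed.
Lemma dcosh x : derivable_pt_lim cosh x (sinh x). Proof. apply derivable_pt_lim_cosh. Qed.

Lemma L_s : lim0 (fun t => sinh t / t) 1.
Proof.
  apply (LH sinh (fun t => t) cosh (fun _ => 1)).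
  - eapply deriv_cont; apply dsinh.
  - eapply deriv_cont; apply D_id.
  - apply sinh_0. - reflexivity.
  - intros; apply dsinh. - intros; apply D_id. - auto. - intros; lra.
  - apply lim0_ext with cosh. intros; field. rewrite <- cosh_0. apply deriv_lim0 with (sinh 0). apply dcosh.
Qed.

Lemma dN1 t : derivable_pt_lim (fun t => t * cosh t - sinh t) t (t * sinh t).
Proof. eapply D_eq. apply D_sub. apply D_mul. apply D_id. apply dcosh. apply dsinh. cbv beta; ring. Qed.
Lemma dtt t : derivable_pt_lim (fun t => t * t) t (2 * t).
Proof. eapply D_eq. apply D_mul; apply D_id. cbv beta; ring. Qed.
Lemma dttt t : derivable_pt_lim (fun t => t * t * t) t (3 * (t * t)).
Proof. eapply D_eq. apply D_mul. apply dtt. apply D_id. cbv beta; ring. Qed.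

Lemma L_a : lim0 (fun t => (t * cosh t - sinh t) / (t * t)) 0.
Proof.
  apply (LH _ _ (fun t => t * sinh t) (fun t => 2 * t)).
  - eapply deriv_cont; apply dN1.
  - eapply deriv_cont; apply dtt.
  - cbv beta; rewrite sinh_0; ring. - cbv beta; ring.
  - intros; apply dN1. - intros; apply dtt.
  - intros. apply Rmult_integral_contrapositive; auto. - intros; lra.
  - apply lim0_ext with (fun t => sinh t / 2). intros; field; auto.
    replace 0 with (sinh 0 / 2) by (rewrite sinh_0; field).
    apply deriv_lim0 with (cosh 0 / 2). eapply D_eq. apply D_div. apply dsinh. apply D_const. cbv beta; lra. cbv beta; field.
Qed.

Lemma L_c : lim0 (fun t => (cosh t - 1) / (3 * (t * t))) (/ 6).
Proof.
  apply (LH _ _ sinh (fun t => 6 * t)).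
  - eapply deriv_cont. eapply D_sub. apply dcosh. apply D_const.
  - eapply deriv_cont. eapply D_mul. apply D_const. apply dtt.
  - cbv beta; rewrite cosh_0; ring. - cbv beta; ring.
  - intros. eapply D_eq. apply D_sub. apply dcosh. apply D_const. cbv beta; ring.
  - intros. eapply D_eq. apply D_mul. apply D_const. apply dtt. cbv beta; ring.
  - intros. apply Rmult_integral_contrapositive; split; [lra|]. apply Rmult_integral_contrapositive; auto.
  - intros; lra.
  - apply lim0_ext with (fun t => sinh t / t * / 6). intros; field; auto.
    eapply lim0_eq. apply lim0_mult. apply L_s. apply lim0_const. ring.
Qed.

Lemma L_b : lim0 (fun t => (sinh t - t) / (t * t * t)) (/ 6).
Proof.
  apply (LH _ _ (fun t => cosh t - 1) (fun t => 3 * (t * t))).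
  - eapply deriv_cont. eapply D_sub. apply dsinh. apply D_id.
  - eapply deriv_cont. apply dttt.
  - cbv beta; rewrite sinh_0; ring. - cbv beta; ring.
  - intros. apply D_sub. apply dsinh. apply D_id.
  - intros. apply dttt.
  - intros. repeat apply Rmult_integral_contrapositive; auto.
  - intros. apply Rmult_integral_contrapositive; split; [lra|]. apply Rmult_integral_contrapositive; auto.
  - apply L_c.
Qed.

Definition psi t := if Req_EM_T t 0 then 0 else ln (sinh t / t).
Definition psi1 t := if Req_EM_T t 0 then 0 else cosh t / sinh t - / t.
Definition psi2 t := if Req_EM_T t 0 then / 3 else / (t * t) - / (sinh t * sinh t).
Definition psi3 t := - (2 / (t * t * t)) + 2 * cosh t / (sinh t * sinh t * sinh t).

Lemma psi_ne t : t <> 0 -> psi t = ln (sinh t / t).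
Proof. intros; unfold psi; destruct (Req_EM_T t 0); tauto. Qed.
Lemma psi1_ne t : t <> 0 -> psi1 t = cosh t / sinh t - / t.
Proof. intros; unfold psi1; destruct (Req_EM_T t 0); tauto. Qed.
Lemma psi2_ne t : t <> 0 -> psi2 t = / (t * t) - / (sinh t * sinh t).
Proof. intros; unfold psi2; destruct (Req_EM_T t 0); tauto. Qed.
Lemma psi_0 : psi 0 = 0. Proof. unfold psi; destruct (Req_EM_T 0 0); tauto. Qed.
Lemma psi1_0 : psi1 0 = 0. Proof. unfold psi1; destruct (Req_EM_T 0 0); tauto. Qed.
Lemma psi2_0 : psi2 0 = / 3. Proof. unfold psi2; destruct (Req_EM_T 0 0); tauto. Qed.

Lemma loc_ne0 f g t l : t <> 0 -> (forall z, z <> 0 -> f z = g z) ->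
  derivable_pt_lim g t l -> derivable_pt_lim f t l.
Proof.
  intros Ht E H. apply (derivable_pt_lim_locally_ext g f t (t - Rabs t) (t + Rabs t)); auto.
  - pose proof (Rabs_pos_lt t Ht); lra.
  - intros z Hz. symmetry. apply E. intros ->. unfold Rabs in Hz; destruct (Rcase_abs t); lra.
Qed.

Lemma D_inv f x a : derivable_pt_lim f x a -> f x <> 0 ->
  derivable_pt_lim (fun t => / f t) x (- a / (f x * f x)).
Proof.
  intros H Hn. apply derivable_pt_lim_ext with (fun t => 1 / f t). intros z; cbv beta; unfold Rdiv; ring.
  eapply D_eq. apply D_div; auto. apply D_const. apply H. cbv beta. field; auto.
Qed.

Lemma dpsi_ne t : t <> 0 -> derivable_pt_lim psi t (psi1 t).
Proof.
  intros Ht. apply loc_ne0 with (fun z => ln (sinh z / z)); auto.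
  intros; apply psi_ne; auto.
  eapply D_eq. apply (D_comp (fun z => sinh z / z) ln). apply D_div. apply dsinh. apply D_id. auto.
  apply derivable_pt_lim_ln. apply S_pos; auto.
  rewrite psi1_ne; auto. cbv beta. pose proof (sinh_ne0 t Ht). field; auto.
Qed.

Lemma dpsi1_ne t : t <> 0 -> derivable_pt_lim psi1 t (psi2 t).
Proof.
  intros Ht. pose proof (sinh_ne0 t Ht).
  apply loc_ne0 with (fun z => cosh z / sinh z - / z); auto.
  intros; apply psi1_ne; auto.
  eapply D_eq. apply D_sub. apply D_div. apply dcosh. apply dsinh. auto.
  apply (D_inv (fun z => z)). apply D_id. auto.
  rewrite psi2_ne; auto. cbv beta. pose proof (ch2 t). field_simplify; auto.
  replace (sinh t ^ 2) with (cosh t * cosh t - 1) by (simpl; lra).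
  field; split; auto. replace (cosh t * cosh t - 1) with (sinh t * sinh t) by lra.
  apply Rmult_integral_contrapositive; auto.
Qed.

Lemma dpsi2_ne t : t <> 0 -> derivable_pt_lim psi2 t (psi3 t).
Proof.
  intros Ht. pose proof (sinh_ne0 t Ht).
  apply loc_ne0 with (fun z => / (z * z) - / (sinh z * sinh z)); auto.
  intros; apply psi2_ne; auto.
  eapply D_eq. apply D_sub. apply (D_inv (fun z => z * z)). apply dtt.
  apply Rmult_integral_contrapositive; auto.
  apply (D_inv (fun z => sinh z * sinh z)). apply D_mul; apply dsinh.
  apply Rmult_integral_contrapositive; auto.
  unfold psi3. cbv beta. field; auto.
Qed.

Lemma lim_psi : lim0 psi 0.
Proof.
  apply lim0_ext with (fun t => ln (sinh t / t)). intros; rewrite psi_ne; auto.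
  rewrite <- ln_1. apply (lim0_comp (fun t => sinh t / t) ln 1). apply L_s.
  apply deriv_cont with (/ 1). apply derivable_pt_lim_ln. lra.
Qed.

Lemma lim_psi1 : lim0 psi1 0.
Proof.
  apply lim0_ext with (fun t => (t * cosh t - sinh t) / (t * t) * / (sinh t / t)).
  intros. rewrite psi1_ne; auto. pose proof (sinh_ne0 t H). field; auto.
  eapply lim0_eq. apply lim0_mult. apply L_a. apply lim0_inv. apply L_s. lra. ring.
Qed.

Lemma lim_psi2 : lim0 psi2 (/ 3).
Proof.
  apply lim0_ext with (fun t => (sinh t - t) / (t * t * t) * (sinh t / t + 1) * (/ (sinh t / t) * / (sinh t / t))).
  intros. rewrite psi2_ne; auto. pose proof (sinh_ne0 t H). field; auto.
  eapply lim0_eq. apply lim0_mult. apply lim0_mult. apply L_b. apply lim0_plus. apply L_s. apply lim0_const.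
  apply lim0_mult; apply lim0_inv; try apply L_s; lra. field.
Qed.

Lemma dpsi t : derivable_pt_lim psi t (psi1 t).
Proof.
  destruct (Req_dec t 0) as [->|Ht]; [|apply dpsi_ne; auto].
  apply D_at0. apply lim0_cont. rewrite psi_0. apply lim_psi.
  apply dpsi_ne. rewrite psi1_0. apply lim_psi1.
Qed.

Lemma dpsi1 t : derivable_pt_lim psi1 t (psi2 t).
Proof.
  destruct (Req_dec t 0) as [->|Ht]; [|apply dpsi1_ne; auto].
  apply D_at0. apply lim0_cont. rewrite psi1_0. apply lim_psi1.
  apply dpsi1_ne. rewrite psi2_0. apply lim_psi2.
Qed.

Lemma mono_deriv g g' a b : (forall z, a <= z <= b -> derivable_pt_lim g z (g' z)) ->
  (forall z, a <= z <= b -> 0 <= g' z) -> a <= b -> g a <= g b.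
Proof.
  intros dg pg Hab. destruct (Req_dec a b) as [->|]; [lra|].
  destruct (MVT_cor2 g g' a b) as [c [E Hc]]; [lra|auto|].
  assert (0 <= g' c) by (apply pg; lra). nra.
Qed.

Lemma mono_deriv' g g' a b : (forall z, a <= z <= b -> derivable_pt_lim g z (g' z)) ->
  (forall z, a <= z <= b -> g' z <= 0) -> a <= b -> g b <= g a.
Proof.
  intros dg pg Hab. destruct (Req_dec a b) as [->|]; [lra|].
  destruct (MVT_cor2 g g' a b) as [c [E Hc]]; [lra|auto|].
  assert (g' c <= 0) by (apply pg; lra). nra.
Qed.

Lemma sinh_nonneg t : 0 <= t -> 0 <= sinh t.
Proof. intros. destruct (Req_dec t 0) as [->|]. rewrite sinh_0; lra. left; apply sinh_pos; lra. Qed.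

Lemma k_nonneg t : 0 <= t -> 0 <= t * cosh t - sinh t.
Proof.
  intros Ht. assert (H := mono_deriv (fun t => t * cosh t - sinh t) (fun t => t * sinh t) 0 t).
  cbv beta in H. rewrite sinh_0 in H. replace (0 * cosh 0 - 0) with 0 in H by ring. apply H; auto.
  intros; apply dN1. intros z Hz. pose proof (sinh_nonneg z). nra.
Qed.

Lemma g_nonneg t : 0 <= t -> 0 <= 2 * t * cosh t * cosh t + t - 3 * sinh t * cosh t.
Proof.
  intros Ht.
  assert (H := mono_deriv (fun t => 2 * t * cosh t * cosh t + t - 3 * sinh t * cosh t)
     (fun t => 4 * sinh t * (t * cosh t - sinh t)) 0 t).
  cbv beta in H. rewrite sinh_0 in H. replace (2 * 0 * cosh 0 * cosh 0 + 0 - 3 * 0 * cosh 0) with 0 in H by ring.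
  apply H; auto.
  - intros z _. eapply D_eq. apply D_sub. apply D_add. apply D_mul. apply D_mul. apply D_mul.
    apply D_const. apply D_id. apply dcosh. apply dcosh. apply D_id.
    apply D_mul. apply D_mul. apply D_const. apply dsinh. apply dcosh.
    cbv beta. pose proof (ch2 z). nra.
  - intros z Hz. pose proof (sinh_nonneg z). pose proof (k_nonneg z). nra.
Qed.

Lemma key_ineq t : 0 < t -> t * t * t * cosh t <= sinh t * sinh t * sinh t.
Proof.
  intros Ht.
  assert (Hf : 0 <= 3 * psi t - ln (cosh t)).
  { assert (H := mono_deriv (fun z => 3 * psi z - ln (cosh z)) (fun z => 3 * psi1 z - / cosh z * sinh z) 0 t).
    cbv beta in H. rewrite psi_0, cosh_0, ln_1 in H. replace (3 * 0 - 0) with 0 in H by ring.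
    apply H; [| |lra].
    - intros z _. apply D_sub. eapply D_eq. apply D_mul. apply D_const. apply dpsi. cbv beta; ring.
      apply (D_comp cosh ln). apply dcosh. apply derivable_pt_lim_ln. apply cosh_pos.
    - intros z Hz. destruct (Req_dec z 0) as [->|Hz0].
      + rewrite psi1_0, sinh_0. lra.
      + rewrite psi1_ne; auto. assert (Hzp : 0 < z) by lra. pose proof (sinh_pos z Hzp). pose proof (cosh_pos z).
        pose proof (g_nonneg z). pose proof (ch2 z).
        replace (3 * (cosh z / sinh z - / z) - / cosh z * sinh z) with
          ((2 * z * cosh z * cosh z + z - 3 * sinh z * cosh z) / (z * sinh z * cosh z)).
        assert (0 < z * sinh z * cosh z) by (apply Rmult_lt_0_compat; [apply Rmult_lt_0_compat|]; auto).
        unfold Rdiv. apply Rmult_le_pos. lra. left. apply Rinv_0_lt_compat. auto.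
        replace (2 * z * cosh z * cosh z + z - 3 * sinh z * cosh z) with
          (3 * z * cosh z * cosh z - z * (sinh z * sinh z) - 3 * sinh z * cosh z) by nra.
        field. lra. }
  rewrite psi_ne in Hf; [|lra].
  pose proof (S_pos t ltac:(lra)) as HS.
  assert (E : ln (sinh t / t * (sinh t / t) * (sinh t / t)) = 3 * ln (sinh t / t)).
  { assert (G : forall S, 0 < S -> ln (S * S * S) = 3 * ln S).
    { intros S HS0. rewrite !ln_mult; auto; [ring | apply Rmult_lt_0_compat; auto]. }
    apply G; auto. }
  assert (cosh t <= sinh t / t * (sinh t / t) * (sinh t / t)).
  { generalize dependent (sinh t / t). intros S HS0 E Hf.
    destruct (Rle_or_lt (cosh t) (S * S * S)) as [|Hl]; auto.
    apply ln_increasing in Hl; [lra | repeat apply Rmult_lt_0_compat; auto]. }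
  replace (sinh t * sinh t * sinh t) with (t * t * t * (sinh t / t * (sinh t / t) * (sinh t / t))) by (field; lra).
  apply Rmult_le_compat_l; auto. left; apply Rmult_lt_0_compat; [apply Rmult_lt_0_compat|]; lra.
Qed.

Lemma psi3_nonpos t : 0 < t -> psi3 t <= 0.
Proof.
  intros Ht. pose proof (key_ineq t Ht). pose proof (sinh_pos t Ht).
  unfold psi3.
  replace (- (2 / (t * t * t)) + 2 * cosh t / (sinh t * sinh t * sinh t)) with
    (2 * (t * t * t * cosh t - sinh t * sinh t * sinh t) / ((t * t * t) * (sinh t * sinh t * sinh t)))
    by (field; lra).
  assert (0 < t * t * t) by (apply Rmult_lt_0_compat; [apply Rmult_lt_0_compat|]; lra).
  assert (0 < sinh t * sinh t * sinh t) by (apply Rmult_lt_0_compat; [apply Rmult_lt_0_compat|]; lra).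
  assert (0 < / ((t * t * t) * (sinh t * sinh t * sinh t))) by (apply Rinv_0_lt_compat; apply Rmult_lt_0_compat; lra).
  unfold Rdiv. nra.
Qed.

Lemma psi2_dec t1 t2 : 0 < t1 -> t1 <= t2 -> psi2 t2 <= psi2 t1.
Proof.
  intros H1 H2. apply (mono_deriv' psi2 psi3); auto.
  intros; apply dpsi2_ne; lra. intros; apply psi3_nonpos; lra.
Qed.

Lemma psi2_le3 t : 0 < t -> psi2 t <= / 3.
Proof.
  intros Ht. destruct (Rle_or_lt (psi2 t) (/3)) as [|H]; auto.
  pose proof lim_psi2 as L. rewrite lim0_def in L.
  destruct (L (psi2 t - / 3) ltac:(lra)) as [d [Hd H1]].
  set (t0 := Rmin (d / 2) t).
  assert (0 < t0) by (unfold t0; apply Rmin_pos; lra).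
  assert (t0 <= t) by (unfold t0; apply Rmin_r).
  assert (t0 <= d / 2) by (unfold t0; apply Rmin_l).
  assert (Rabs (psi2 t0 - / 3) < psi2 t - / 3) by (apply H1; [lra| rewrite Rabs_right; lra]).
  pose proof (psi2_dec t0 t H0 H2). apply Rabs_def2 in H4. lra.
Qed.

Lemma psi2_even t : psi2 (- t) = psi2 t.
Proof.
  destruct (Req_dec t 0) as [->|Ht]. rewrite Ropp_0; auto.
  rewrite !psi2_ne; auto. rewrite sinh_opp. field; split; auto. apply sinh_ne0; auto. lra.
Qed.

Lemma psi2_abs t : psi2 (Rabs t) = psi2 t.
Proof. unfold Rabs; destruct (Rcase_abs t); auto. apply psi2_even. Qed.

Lemma psi2_cmp p q : Rabs p <= Rabs q -> psi2 q <= psi2 p.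
Proof.
  intros H. rewrite <- (psi2_abs p), <- (psi2_abs q).
  destruct (Req_dec (Rabs p) 0) as [E|E].
  - rewrite E, psi2_0. destruct (Req_dec (Rabs q) 0) as [E'|E']. rewrite E', psi2_0; lra.
    apply psi2_le3. pose proof (Rabs_pos q); lra.
  - apply psi2_dec; auto. pose proof (Rabs_pos p); lra.
Qed.

Lemma conv_core (P : R -> Prop) f f' :
  (forall z, derivable_pt_lim f z (f' z)) ->
  (forall u v z, P u -> P v -> u <= z <= v -> P z) ->
  (forall u v, P u -> P v -> u <= v -> f' u <= f' v) ->
  forall a b t, P a -> P b -> a < b -> 0 <= t <= 1 ->
    f (t * a + (1 - t) * b) <= t * f a + (1 - t) * f b.
Proof.
  intros df Pint mono a b t Pa Pb Hab Ht.
  destruct (Req_dec t 0) as [->|H0].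
  { replace (0 * a + (1 - 0) * b) with b by ring. lra. }
  destruct (Req_dec t 1) as [->|H1].
  { replace (1 * a + (1 - 1) * b) with a by ring. lra. }
  set (c := t * a + (1 - t) * b).
  assert (Hc : a < c < b) by (unfold c; split; nra).
  destruct (MVT_cor2 f f' a c) as [x1 [E1 Hx1]]; [lra| intros; auto |].
  destruct (MVT_cor2 f f' c b) as [x2 [E2 Hx2]]; [lra| intros; auto |].
  assert (f' x1 <= f' x2).
  { apply mono. apply Pint with a b; auto; lra. apply Pint with a b; auto; lra. lra. }
  assert (Ec : c - a = (1 - t) * (b - a)) by (unfold c; ring).
  assert (Ec2 : b - c = t * (b - a)) by (unfold c; ring).
  rewrite Ec in E1. rewrite Ec2 in E2.
  assert (t * (1 - t) * (b - a) * f' x1 <= t * (1 - t) * (b - a) * f' x2).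
  { apply Rmult_le_compat_l; auto. apply Rmult_le_pos. apply Rmult_le_pos; lra. lra. }
  nra.
Qed.

Lemma conv_gen (P : R -> Prop) f f' :
  (forall z, derivable_pt_lim f z (f' z)) ->
  (forall u v z, P u -> P v -> u <= z <= v -> P z) ->
  (forall u v, P u -> P v -> u <= v -> f' u <= f' v) ->
  convex_on P f.
Proof.
  intros df Pint mono a b t Pa Pb Ht.
  destruct (Rtotal_order a b) as [H|[H|H]].
  - apply (conv_core P f f'); auto.
  - subst. replace (t * b + (1 - t) * b) with b by ring. lra.
  - replace (t * a + (1 - t) * b) with ((1 - t) * b + (1 - (1 - t)) * a) by ring.
    replace (t * f a + (1 - t) * f b) with ((1 - t) * f b + (1 - (1 - t)) * f a) by ring.
    apply (conv_core P f f'); auto; lra.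
Qed.

Lemma conc_gen (P : R -> Prop) f f' :
  (forall z, derivable_pt_lim f z (f' z)) ->
  (forall u v z, P u -> P v -> u <= z <= v -> P z) ->
  (forall u v, P u -> P v -> u <= v -> f' v <= f' u) ->
  concave_on P f.
Proof.
  intros df Pint mono.
  assert (C : convex_on P (fun z => - f z)).
  { apply conv_gen with (fun z => - f' z); auto.
    intros z. apply (derivable_pt_lim_opp f z (f' z)); auto.
    intros u v Pu Pv Huv. pose proof (mono u v Pu Pv Huv). lra. }
  intros a b t Pa Pb Ht. pose proof (C a b t Pa Pb Ht). cbv beta in H. lra.
Qed.

Definition mm x y := (ln x + ln y) / 2.
Definition hh x y := (ln y - ln x) / 2.
Definition K x y p := / p * ((Rpower y p - Rpower x p) / (ln y - ln x)).

Lemma lnxy x y : 0 < x -> 0 < y -> x <> y -> ln y - ln x <> 0.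
Proof. intros hx hy hxy E. apply hxy. apply ln_inv; auto. lra. Qed.

Lemma hh_ne x y : 0 < x -> 0 < y -> x <> y -> hh x y <> 0.
Proof. intros. pose proof (lnxy x y H H0 H1). unfold hh. lra. Qed.

Lemma Rpow_y x y p : Rpower y p = exp (p * mm x y) * exp (hh x y * p).
Proof. unfold Rpower. rewrite <- exp_plus. f_equal. unfold mm, hh. field. Qed.
Lemma Rpow_x x y p : Rpower x p = exp (p * mm x y) * exp (- (hh x y * p)).
Proof. unfold Rpower. rewrite <- exp_plus. f_equal. unfold mm, hh. field. Qed.

Lemma Kexp x y p : 0 < x -> 0 < y -> x <> y -> p <> 0 ->
  K x y p = exp (p * mm x y) * (sinh (hh x y * p) / (hh x y * p)).
Proof.
  intros hx hy hxy hp. pose proof (hh_ne x y hx hy hxy).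
  unfold K. rewrite (Rpow_y x y p), (Rpow_x x y p).
  replace (ln y - ln x) with (2 * hh x y) by (unfold hh; field).
  unfold sinh. field. auto.
Qed.

Lemma Kpos x y p : 0 < x -> 0 < y -> x <> y -> p <> 0 -> 0 < K x y p.
Proof.
  intros. rewrite Kexp; auto. apply Rmult_lt_0_compat. apply exp_pos. apply S_pos.
  apply Rmult_integral_contrapositive; split; auto. apply hh_ne; auto.
Qed.

Lemma lnK x y p : 0 < x -> 0 < y -> x <> y -> p <> 0 ->
  ln (K x y p) = p * mm x y + psi (hh x y * p).
Proof.
  intros. assert (hp : hh x y * p <> 0) by (apply Rmult_integral_contrapositive; split; auto; apply hh_ne; auto).
  rewrite Kexp; auto. rewrite ln_mult. rewrite ln_exp, psi_ne; auto. apply exp_pos. apply S_pos; auto.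
Qed.

Lemma Rpower_pos a c : 0 < Rpower a c.
Proof. unfold Rpower; apply exp_pos. Qed.

Definition Lf r s x y w :=
  if Req_EM_T r s then mm x y + hh x y * psi1 (hh x y * (r + w))
  else mm x y + (psi (hh x y * (s + w)) - psi (hh x y * (r + w))) / (s - r).

Lemma main_eq r s x y w : 0 < x -> 0 < y -> x <> y -> ln (F r s x y w) = Lf r s x y w.
Proof.
  intros hx hy hxy. pose proof (hh_ne x y hx hy hxy) as hh0. pose proof (lnxy x y hx hy hxy) as lxy.
  unfold F, E, Lf. destruct (Req_EM_T x y) as [|_]; [contradiction|].
  destruct (Req_EM_T (r + w) (s + w)) as [Epq|Npq].
  - destruct (Req_EM_T r s) as [_|Nrs]; [|exfalso; apply Nrs; lra].
    destruct (Req_EM_T (r + w) 0) as [E0|N0].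
    + rewrite E0, Rmult_0_r, psi1_0. rewrite <- Rpower_sqrt by (apply Rmult_lt_0_compat; auto).
      rewrite ln_Rpower, ln_mult by auto. unfold mm. field.
    + set (p := r + w) in *.
      assert (hp : hh x y * p <> 0) by (apply Rmult_integral_contrapositive; split; auto).
      rewrite ln_mult by (apply exp_pos || apply Rpower_pos).
      rewrite ln_exp, ln_Rpower. unfold Rdiv at 1. rewrite ln_mult by (apply Rpower_pos || (apply Rinv_0_lt_compat; apply Rpower_pos)).
      rewrite ln_Rinv by apply Rpower_pos. rewrite !ln_Rpower.
      rewrite psi1_ne by auto.
      replace (ln x) with (mm x y - hh x y) by (unfold mm, hh; field).
      replace (ln y) with (mm x y + hh x y) by (unfold mm, hh; field).
      rewrite (Rpow_y x y p), (Rpow_x x y p).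
      pose proof (sinh_ne0 _ hp) as Hs. unfold sinh in Hs. unfold cosh, sinh.
      assert (exp (p * mm x y) <> 0) by apply exp_neq_0.
      assert (exp (- (hh x y * p)) - exp (hh x y * p) <> 0) by lra.
      field. split; auto. split; auto. split. lra. rewrite <- Rmult_minus_distr_l. apply Rmult_integral_contrapositive; auto.
  - destruct (Req_EM_T r s) as [Ers|_]; [exfalso; apply Npq; lra|].
    assert (Hsr : s - r = (s + w) - (r + w)) by ring.
    destruct (Req_EM_T (s + w) 0) as [E0|N0].
    + assert (N1 : r + w <> 0) by lra.
      fold (K x y (r + w)). rewrite ln_Rpower, lnK by auto.
      rewrite Hsr, E0, Rmult_0_r, psi_0. field. auto.
    + destruct (Req_EM_T (r + w) 0) as [E1|N1].
      * fold (K x y (s + w)). rewrite ln_Rpower, lnK by auto.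
        rewrite Hsr, E1, Rmult_0_r, psi_0. field. auto.
      * rewrite ln_Rpower.
        set (p := r + w) in *. set (q := s + w) in *.
        pose proof (Kpos x y p hx hy hxy N1) as Kp. pose proof (Kpos x y q hx hy hxy N0) as Kq.
        assert (Dp : Rpower y p - Rpower x p <> 0).
        { intros Z. unfold K in Kp. rewrite Z in Kp. unfold Rdiv in Kp. rewrite Rmult_0_l, Rmult_0_r in Kp. lra. }
        replace (p / q * ((Rpower y q - Rpower x q) / (Rpower y p - Rpower x p))) with (K x y q * / K x y p)
          by (unfold K; field; repeat split; auto).
        rewrite ln_mult, ln_Rinv, !lnK by (auto; apply Rinv_0_lt_compat; auto).
        rewrite Hsr. field. lra.
Qed.

Lemma dlin g g' h c w : (forall z, derivable_pt_lim g z (g' z)) ->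
  derivable_pt_lim (fun w => g (h * (c + w))) w (g' (h * (c + w)) * h).
Proof.
  intros dg. eapply D_eq. apply (D_comp (fun w => h * (c + w)) g).
  apply D_mul. apply D_const. apply D_add. apply D_const. apply D_id. apply dg.
  cbv beta. ring.
Qed.

Lemma abs_le_h h A B : Rabs A <= Rabs B -> Rabs (h * A) <= Rabs (h * B).
Proof. intros. rewrite !Rabs_mult. apply Rmult_le_compat_l; auto. apply Rabs_pos. Qed.

Lemma sign_left h A B : A + B < 0 -> A <> B ->
  0 <= (psi2 (h * A) * h * h - psi2 (h * B) * h * h) / (A - B).
Proof.
  intros H1 H2. assert (0 <= h * h) by nra.
  destruct (Rlt_or_le B A) as [H3|H3].
  - assert (Rabs A <= Rabs B) by (unfold Rabs; destruct (Rcase_abs A); destruct (Rcase_abs B); lra).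
    pose proof (psi2_cmp (h * A) (h * B) (abs_le_h h A B H0)).
    unfold Rdiv. apply Rmult_le_pos. nra. left; apply Rinv_0_lt_compat; lra.
  - assert (Rabs B <= Rabs A) by (unfold Rabs; destruct (Rcase_abs A); destruct (Rcase_abs B); lra).
    pose proof (psi2_cmp (h * B) (h * A) (abs_le_h h B A H0)).
    replace ((psi2 (h * A) * h * h - psi2 (h * B) * h * h) / (A - B)) with
      ((psi2 (h * B) * h * h - psi2 (h * A) * h * h) / (B - A)) by (field; lra).
    unfold Rdiv. apply Rmult_le_pos. nra. left; apply Rinv_0_lt_compat; lra.
Qed.

Lemma sign_right h A B : 0 < A + B -> A <> B ->
  (psi2 (h * A) * h * h - psi2 (h * B) * h * h) / (A - B) <= 0.
Proof.
  intros H1 H2. pose proof (sign_left h (- A) (- B) ltac:(lra) ltac:(lra)).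
  replace (h * - A) with (- (h * A)) in H by ring. replace (h * - B) with (- (h * B)) in H by ring.
  rewrite !psi2_even in H.
  replace ((psi2 (h * A) * h * h - psi2 (h * B) * h * h) / (- A - - B)) with
    (- ((psi2 (h * A) * h * h - psi2 (h * B) * h * h) / (A - B))) in H by (field; lra).
  lra.
Qed.

Lemma Fxx r s x w : ln (F r s x x w) = ln x.
Proof. unfold F, E. destruct (Req_EM_T x x); [auto | contradiction]. Qed.

Lemma conv_part r s x y : 0 < x -> 0 < y -> x <> y ->
  convex_on (fun w => w < - ((s + r) / 2)) (Lf r s x y) /\
  concave_on (fun w => - ((s + r) / 2) < w) (Lf r s x y).
Proof.
  intros hx hy hxy. set (hv := hh x y). set (mv := mm x y).
  unfold Lf. fold hv mv. destruct (Req_EM_T r s) as [<-|Nrs].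
  - assert (dL : forall w, derivable_pt_lim (fun w => mv + hv * psi1 (hv * (r + w))) w
                     (hv * hv * psi2 (hv * (r + w)))).
    { intros w. eapply D_eq. apply D_add. apply D_const. apply D_mul. apply D_const.
      apply (dlin psi1 psi2). apply dpsi1. cbv beta. ring. }
    split.
    + apply conv_gen with (fun w => hv * hv * psi2 (hv * (r + w))); auto.
      intros u v z Hu Hv Hz; lra.
      intros u v Hu Hv Huv. apply Rmult_le_compat_l. nra. apply psi2_cmp, abs_le_h.
      unfold Rabs; destruct (Rcase_abs (r + u)); destruct (Rcase_abs (r + v)); lra.
    + apply conc_gen with (fun w => hv * hv * psi2 (hv * (r + w))); auto.
      intros u v z Hu Hv Hz; lra.
      intros u v Hu Hv Huv. apply Rmult_le_compat_l. nra. apply psi2_cmp, abs_le_h.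
      unfold Rabs; destruct (Rcase_abs (r + u)); destruct (Rcase_abs (r + v)); lra.
  - set (L1 := fun w => (psi1 (hv * (s + w)) * hv - psi1 (hv * (r + w)) * hv) / (s - r)).
    set (L2 := fun w => (psi2 (hv * (s + w)) * hv * hv - psi2 (hv * (r + w)) * hv * hv) / (s - r)).
    assert (Hsr : s - r <> 0) by lra.
    assert (dL : forall w, derivable_pt_lim (fun w => mv + (psi (hv * (s + w)) - psi (hv * (r + w))) / (s - r)) w (L1 w)).
    { intros w. eapply D_eq. apply D_add. apply D_const. apply D_div. apply D_sub.
      apply (dlin psi psi1). apply dpsi. apply (dlin psi psi1). apply dpsi. apply D_const. cbv beta; auto.
      unfold L1. cbv beta. field. auto. }
    assert (dL1 : forall w, derivable_pt_lim L1 w (L2 w)).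
    { intros w. unfold L1, L2. eapply D_eq. apply D_div. apply D_sub.
      apply D_mul. apply (dlin psi1 psi2). apply dpsi1. apply D_const.
      apply D_mul. apply (dlin psi1 psi2). apply dpsi1. apply D_const. apply D_const. cbv beta; auto.
      cbv beta. field. auto. }
    assert (HL2 : forall w, L2 w = (psi2 (hv * (s + w)) * hv * hv - psi2 (hv * (r + w)) * hv * hv) / ((s + w) - (r + w))).
    { intros w. unfold L2. f_equal. ring. }
    split.
    + apply conv_gen with L1; auto.
      intros u v z Hu Hv Hz; lra.
      intros u v Hu Hv Huv. apply (mono_deriv L1 L2); auto.
      intros z Hz. rewrite HL2. apply sign_left; lra.
    + apply conc_gen with L1; auto.
      intros u v z Hu Hv Hz; lra.
      intros u v Hu Hv Huv. apply (mono_deriv' L1 L2); auto.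
      intros z Hz. rewrite HL2. apply sign_right; lra.
Qed.

Theorem theorem3 (x y r s : R) (hx : 0 < x) (hy : 0 < y) :
  convex_on (fun w => w < - ((s + r) / 2)) (fun w => ln (F r s x y w)) /\
  concave_on (fun w => - ((s + r) / 2) < w) (fun w => ln (F r s x y w)).
Proof.
  destruct (Req_dec x y) as [<-|hxy].
  - split; intros a b t _ _ _; rewrite !Fxx; lra.
  - destruct (conv_part r s x y hx hy hxy) as [C1 C2]. split.
    + intros a b t Pa Pb Ht. rewrite !main_eq by auto. apply C1; auto.
    + intros a b t Pa Pb Ht. rewrite !main_eq by auto. apply C2; auto.
Qed.
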